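(* There is no $3$-dimensional Hopf superalgebra $A=A_0\oplus A_1$ over $\mathbb{K}$ with $A_1\neq 0$.
   Context: $\mathbb{K}$ is an algebraically closed field of characteristic $0$. A superalgebra is an associative unital $\mathbb{K}$-algebra $A=A_0\oplus A_1$ with a $\mathbb{Z}/2\mathbb{Z}$-grading such that $A_iA_j\subseteq A_{i+j}$ and $1\in A_0$; $|a|$ denotes the degree. $A\otimes A$ has product $(a\otimes b)(c\otimes d)=(-1)^{|b||c|}ac\otimes bd$. A superbialgebra is a superalgebra with even linear maps $\Delta:A\to A\otimes A$, $\varepsilon:A\to\mathbb{K}$ ($\mathbb{K}$ in degree $0$) which are coassociative and counital and are unital algebra homomorphisms. A Hopf superalgebra is a superbialgebra with an even linear map $S:A\to A$ satisfying $\mu\circ(S\otimes\mathrm{id})\circ\Delta=\mu\circ(\mathrm{id}\otimes S)\circ\Delta=\eta\circ\varepsilon$, where $\mu$ is the product and $\eta(\lambda)=\lambda1$. *)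

(* Defs.v *)
From HB Require Import structures.
From mathcomp Require Import all_boot all_order all_algebra.
Set Implicit Arguments. Unset Strict Implicit. Unset Printing Implicit Defensive.
Import Order.TTheory GRing.Theory Num.Theory.
Local Open Scope ring_scope.

(* A finite-dimensional superalgebra A = A_0 (+) A_1 over K is described in a
   homogeneous basis e_0, ..., e_(n-1) of A (every Z/2-graded space has one:
   a basis of A_0 together with a basis of A_1).
   - d i : bool is the degree of e_i (false = even, true = odd);
   - e_i e_j = \sum_k m i j k e_k                    (product)
   - 1 = \sum_k u k e_k                              (unit)
   - Delta(e_k) = \sum_(i,j) c k i j e_i (x) e_j     (coproduct; e_i(x)e_j
                                                      is a basis of A (x) A)
   - eps(e_k) = ep k                                 (counit)
   - S(e_i) = \sum_j s i j e_j                       (antipode)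
   All maps are linear by construction; every axiom below is the literal
   coordinate expression of the corresponding axiom on basis elements. *)

Definition kron {K : nzRingType} n (i j : 'I_n) : K := (i == j)%:R.

Definition ssign {K : nzRingType} (a b : bool) : K := if a && b then -1 else 1.

Definition is_hopf_superalgebra (K : fieldType) (n : nat) (d : 'I_n -> bool)
  (m : 'I_n -> 'I_n -> 'I_n -> K) (u : 'I_n -> K)
  (c : 'I_n -> 'I_n -> 'I_n -> K) (ep : 'I_n -> K)
  (s : 'I_n -> 'I_n -> K) : Prop :=
  (forall i j k, m i j k != 0 -> d k = d i (+) d j) /\
      (forall k, u k != 0 -> d k = false) /\
  (* Delta, eps, S are even (K in degree 0; e_i(x)e_j has degree d i + d j) *)
      (forall k i j, c k i j != 0 -> d k = d i (+) d j) /\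
      (forall k, ep k != 0 -> d k = false) /\
      (forall i j, s i j != 0 -> d j = d i) /\
      (forall i j l k, \sum_p m i j p * m p l k = \sum_p m j l p * m i p k) /\
      (forall j k, \sum_p u p * m p j k = kron j k) /\
      (forall j k, \sum_p u p * m j p k = kron j k) /\
      (forall k i j l, \sum_p c k p l * c p i j = \sum_p c k i p * c p j l) /\
      (forall k j, \sum_i ep i * c k i j = kron k j) /\
      (forall k i, \sum_j ep j * c k i j = kron k i) /\
  (* Delta is an algebra map A -> A (x) A (super tensor product) *)
      (forall a b i j, \sum_p m a b p * c p i j =
         \sum_i1 \sum_j1 \sum_i2 \sum_j2
           c a i1 j1 * c b i2 j2 * ssign (d j1) (d i2)
             * m i1 i2 i * m j1 j2 j) /\
      (forall i j, \sum_p u p * c p i j = u i * u j) /\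
      (forall a b, \sum_p m a b p * ep p = ep a * ep b) /\
      (\sum_p u p * ep p = 1) /\
      (forall k q, \sum_i \sum_j \sum_p c k i j * s i p * m p j q = ep k * u q) /\
      (forall k q, \sum_i \sum_j \sum_p c k i j * s j p * m i p q = ep k * u q).

(* Main.v *)
From HB Require Import structures.
From mathcomp Require Import all_boot all_order all_algebra.
From Stdlib Require Import FunctionalExtensionality.
From mathcomp Require Import ring.
Require Import Defs.
Set Implicit Arguments. Unset Strict Implicit. Unset Printing Implicit Defensive.
Import Order.TTheory GRing.Theory Num.Theory.
Local Open Scope ring_scope.

Section Transform.
Variables (K : fieldType) (n : nat).
Notation I := 'I_n.

Lemma sum_nz (F : I -> K) : \sum_i F i != 0 -> exists i, F i != 0.
Proof.
move=> h; apply/existsP; apply: contraNT h => /existsPn h.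
by apply/eqP; apply: big1 => i _; move: (h i); rewrite negbK => /eqP.
Qed.

Lemma sum_kronl (k : I) (F : I -> K) : \sum_l kron k l * F l = F k.
Proof.
rewrite (bigD1 k) //= /kron eqxx mul1r big1 ?addr0 // => l.
by rewrite eq_sym => /negbTE ->; rewrite mul0r.
Qed.

Lemma sum_kronr (k : I) (F : I -> K) : \sum_l F l * kron l k = F k.
Proof.
rewrite (bigD1 k) //= /kron eqxx mulr1 big1 ?addr0 // => l.
by move=> /negbTE ->; rewrite mulr0.
Qed.

Variables (P Q : I -> I -> K).
Hypothesis PQ : forall p q, \sum_k P p k * Q k q = kron p q.
Hypothesis QP : forall k l, \sum_p Q k p * P p l = kron k l.

Lemma sumQP x (F : I -> K) : \sum_p Q x p * (\sum_z P p z * F z) = F x.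
Proof.
under eq_bigr => p _ do rewrite big_distrr.
rewrite exchange_big /=.
under eq_bigr => z _ do (under eq_bigr => p _ do rewrite mulrA; rewrite -big_distrl /= QP).
exact: sum_kronl.
Qed.

Lemma sumPQ p (F : I -> K) : \sum_k P p k * (\sum_q Q k q * F q) = F p.
Proof.
under eq_bigr => k _ do rewrite big_distrr.
rewrite exchange_big /=.
under eq_bigr => z _ do (under eq_bigr => q _ do rewrite mulrA; rewrite -big_distrl /= PQ).
exact: sum_kronl.
Qed.

Lemma sumQP' x (F : I -> K) : \sum_p (\sum_z F z * Q z p) * P p x = F x.
Proof.
under eq_bigr => p _ do rewrite big_distrl.
rewrite exchange_big /=.
under eq_bigr => z _ do (under eq_bigr => p _ do rewrite -mulrA; rewrite -big_distrr /= QP).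
exact: sum_kronr.
Qed.

Lemma sum3 (F : I -> I -> I -> K) :
  \sum_i \sum_j \sum_p F i j p = \sum_p \sum_i \sum_j F i j p.
Proof.
under eq_bigr => i _ do rewrite exchange_big.
by rewrite exchange_big.
Qed.

Definition phi (v : I -> K) r := \sum_k v k * Q k r.
Definition lc (a : I -> K) (g : I -> I -> K) : I -> K := fun x => \sum_p a p * g p x.
Definition E : I -> I -> K := fun i x => kron i x.

Lemma recon v : lc (fun r => phi v r) P = v.
Proof. apply: functional_extensionality => x; exact: sumQP'. Qed.

Lemma lcE v : lc v E = v.
Proof. apply: functional_extensionality => x; exact: sum_kronr. Qed.

Lemma phi_lc a g r : phi (lc a g) r = \sum_p a p * phi (g p) r.
Proof.
rewrite /phi /lc.
under eq_bigr => k _ do rewrite big_distrl.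
rewrite exchange_big /=; apply: eq_bigr => p _.
rewrite big_distrr /=; apply: eq_bigr => k _; by rewrite mulrA.
Qed.

Lemma phiP p r : phi (P p) r = kron p r.
Proof. exact: PQ. Qed.

Variables (d : I -> bool) (m : I -> I -> I -> K) (u : I -> K)
  (c : I -> I -> I -> K) (ep : I -> K) (s : I -> I -> K).

Definition mulv (v w : I -> K) : I -> K :=
  fun k => \sum_i \sum_j v i * w j * m i j k.

Lemma mulv_lcl a g w : mulv (lc a g) w = lc a (fun p => mulv (g p) w).
Proof.
apply: functional_extensionality => k; rewrite /mulv /lc.
under eq_bigr => i _ do under eq_bigr => j _ do rewrite !big_distrl.
rewrite sum3; apply: eq_bigr => p _.
rewrite big_distrr; apply: eq_bigr => i _ /=.
rewrite big_distrr; apply: eq_bigr => j _ /=.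
by rewrite !mulrA.
Qed.

Lemma mulv_lcr a g w : mulv w (lc a g) = lc a (fun p => mulv w (g p)).
Proof.
apply: functional_extensionality => k; rewrite /mulv /lc.
under eq_bigr => i _ do under eq_bigr => j _ do rewrite !(big_distrl, big_distrr).
rewrite sum3; apply: eq_bigr => p _.
rewrite big_distrr; apply: eq_bigr => i _ /=.
rewrite big_distrr; apply: eq_bigr => j _ /=.
by rewrite !mulrA [a p * w i]mulrC.
Qed.

Lemma sumE1 l (F : I -> K) : \sum_j F j * E l j = F l.
Proof.
rewrite /E (bigD1 l) //= /kron eqxx mulr1 big1 ?addr0 // => j.
by rewrite eq_sym => /negbTE ->; rewrite mulr0.
Qed.

Lemma sumE2 l (F : I -> K) : \sum_j E l j * F j = F l.
Proof. exact: sum_kronl. Qed.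

Hypothesis H : is_hopf_superalgebra d m u c ep s.
Variable D : I -> bool.
Hypothesis Ppar : forall p k, P p k != 0 -> d k = D p.
Hypothesis Qpar : forall k p, Q k p != 0 -> d k = D p.

Lemma eq_lc a g g' : (forall p, g p = g' p) -> lc a g = lc a g'.
Proof. by move=> h; apply: functional_extensionality => x; rewrite /lc; under eq_bigr do rewrite h. Qed.

Lemma mulvE i j : mulv (E i) (E j) = m i j.
Proof.
apply: functional_extensionality => k; rewrite /mulv /E.
under eq_bigr => i' _ do under eq_bigr => j' _ do rewrite -mulrA.
under eq_bigr => i' _ do rewrite -big_distrr /= sum_kronl.
exact: sum_kronl.
Qed.

Lemma mulv_assoc v w z : mulv (mulv v w) z = mulv v (mulv w z).
Proof.
have [_ [_ [_ [_ [_ [Hass _]]]]]] := H.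
rewrite -[v]lcE -[w]lcE -[z]lcE !mulv_lcl; apply: eq_lc => i.
rewrite [mulv (E i) (lc w E)]mulv_lcr mulv_lcl mulv_lcr; apply: eq_lc => j.
rewrite [mulv (E j) _]mulv_lcr mulv_lcr mulv_lcr; apply: eq_lc => l.
rewrite !mulvE; apply: functional_extensionality => k.
rewrite /mulv.
under eq_bigr => i0 _ do (under eq_bigr => j0 _ do rewrite mulrAC; rewrite sumE1).
symmetry; rewrite exchange_big /=.
under eq_bigr => j0 _ do (under eq_bigr => i0 _ do rewrite -mulrA; rewrite sumE2).
by rewrite Hass.
Qed.

Lemma recon' v : v = lc (fun r => phi v r) P.
Proof. by rewrite recon. Qed.

Lemma AL v w k : \sum_p phi v p * phi (mulv (P p) w) k = phi (mulv v w) k.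
Proof. by rewrite [in RHS](recon' v) mulv_lcl phi_lc. Qed.

Lemma AR v w k : \sum_p phi v p * phi (mulv w (P p)) k = phi (mulv w v) k.
Proof. by rewrite [in RHS](recon' v) mulv_lcr phi_lc. Qed.

Definition Mn p q r := phi (mulv (P p) (P q)) r.
Definition Un r := phi u r.

Lemma N_assoc i j l k : \sum_p Mn i j p * Mn p l k = \sum_p Mn j l p * Mn i p k.
Proof. by rewrite /Mn AL AR mulv_assoc. Qed.

Lemma mulv_unitl w : mulv u w = w.
Proof.
have [_ [_ [_ [_ [_ [_ [Hu1 _]]]]]]] := H.
rewrite -[in RHS](lcE w) -{1}(lcE w) mulv_lcr; apply: eq_lc => j.
apply: functional_extensionality => k; rewrite /mulv.
under eq_bigr => i _ do (under eq_bigr => j' _ do rewrite mulrAC; rewrite sumE1).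
exact: Hu1.
Qed.

Lemma mulv_unitr w : mulv w u = w.
Proof.
have [_ [_ [_ [_ [_ [_ [_ [Hu2 _]]]]]]]] := H.
rewrite -[in RHS](lcE w) -{1}(lcE w) mulv_lcl; apply: eq_lc => j.
apply: functional_extensionality => k; rewrite /mulv.
under eq_bigr => i _ do (under eq_bigr => j' _ do rewrite -mulrA).
under eq_bigr => i _ do rewrite -big_distrr. rewrite sumE2; exact: Hu2.
Qed.

Lemma N_unitl j k : \sum_p Un p * Mn p j k = kron j k.
Proof. by rewrite /Un /Mn AL mulv_unitl phiP. Qed.

Lemma N_unitr j k : \sum_p Un p * Mn j p k = kron j k.
Proof. by rewrite /Un /Mn AR mulv_unitr phiP. Qed.

Definition epsv (v : I -> K) := \sum_k v k * ep k.
Definition EPn p := epsv (P p).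

Lemma epsv_lc a g : epsv (lc a g) = \sum_p a p * epsv (g p).
Proof.
rewrite /epsv /lc.
under eq_bigr => k _ do rewrite big_distrl.
rewrite exchange_big /=; apply: eq_bigr => p _.
rewrite big_distrr /=; apply: eq_bigr => k _; by rewrite mulrA.
Qed.

Lemma epsvE i : epsv (E i) = ep i.
Proof. exact: sumE2. Qed.

Lemma epsv_mul v w : epsv (mulv v w) = epsv v * epsv w.
Proof.
have [_ [_ [_ [_ [_ [_ [_ [_ [_ [_ [_ [_ [_ [Hem _]]]]]]]]]]]]]] := H.
rewrite -[v]lcE -[w]lcE mulv_lcl !epsv_lc big_distrl; apply: eq_bigr => i _.
rewrite /= mulv_lcr epsv_lc -mulrA; congr (_ * _); rewrite big_distrr /=; apply: eq_bigr => j _.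
rewrite mulvE !epsvE /epsv Hem; by rewrite mulrCA.
Qed.

Lemma N_epsmul a b : \sum_p Mn a b p * EPn p = EPn a * EPn b.
Proof. by rewrite /EPn -epsv_mul [in RHS](recon' (mulv (P a) (P b))) epsv_lc. Qed.

Definition copv (v : I -> K) : I -> I -> K := fun i j => \sum_k v k * c k i j.
Definition tphi (T : I -> I -> K) p q := \sum_i \sum_j T i j * Q i p * Q j q.
Definition Cn r p q := tphi (copv (P r)) p q.

Lemma copv_lc a g : copv (lc a g) = fun i j => \sum_p a p * copv (g p) i j.
Proof.
apply: functional_extensionality => i; apply: functional_extensionality => j.
rewrite /copv /lc.
under eq_bigr => k _ do rewrite big_distrl.
rewrite exchange_big /=; apply: eq_bigr => p _.
rewrite big_distrr /=; apply: eq_bigr => k _; by rewrite mulrA.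
Qed.

Lemma tphi_lc (A : I -> K) (G : I -> I -> I -> K) p q :
  tphi (fun i j => \sum_r A r * G r i j) p q = \sum_r A r * tphi (G r) p q.
Proof.
rewrite /tphi.
under eq_bigr => i _ do under eq_bigr => j _ do rewrite !big_distrl.
rewrite sum3; apply: eq_bigr => r _.
rewrite big_distrr; apply: eq_bigr => i _ /=.
rewrite big_distrr; apply: eq_bigr => j _ /=.
by rewrite !mulrA.
Qed.

Lemma CL v i j : \sum_p phi v p * tphi (copv (P p)) i j = tphi (copv v) i j.
Proof. by rewrite [in RHS](recon' v) copv_lc tphi_lc. Qed.

Lemma N_unitcop i j : \sum_p Un p * Cn p i j = Un i * Un j.
Proof.
have [_ [_ [_ [_ [_ [_ [_ [_ [_ [_ [_ [_ [Huc _]]]]]]]]]]]]] := H.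
rewrite /Un /Cn CL /tphi /copv /phi.
under eq_bigr => i' _ do under eq_bigr => j' _ do rewrite Huc.
rewrite big_distrl; apply: eq_bigr => i' _ /=.
rewrite big_distrr; apply: eq_bigr => j' _ /=.
by ring.
Qed.

Lemma sum3r (F : I -> I -> I -> K) :
  \sum_p \sum_i \sum_j F p i j = \sum_i \sum_j \sum_p F p i j.
Proof. rewrite exchange_big; apply: eq_bigr => i _; exact: exchange_big. Qed.

Lemma flat4 (A : I -> I -> K) (F : I -> I -> I -> I -> K) :
  \sum_x \sum_y A x y * (\sum_a \sum_b F x y a b) =
  \sum_x \sum_y \sum_a \sum_b A x y * F x y a b.
Proof.
apply: eq_bigr => x _; apply: eq_bigr => y _.
rewrite big_distrr; apply: eq_bigr => a _; by rewrite big_distrr.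
Qed.

Lemma sum4_a (F : I -> I -> I -> I -> K) :
  \sum_x \sum_y \sum_a \sum_b F x y a b = \sum_a \sum_b \sum_y \sum_x F x y a b.
Proof.
under eq_bigr => x _ do rewrite sum3r.
rewrite sum3r; apply: eq_bigr => a _; apply: eq_bigr => b _.
exact: exchange_big.
Qed.

Lemma sum4_b (F : I -> I -> I -> I -> K) :
  \sum_x \sum_y \sum_a \sum_b F x y a b = \sum_x \sum_a \sum_b \sum_y F x y a b.
Proof.
apply: eq_bigr => x _; rewrite exchange_big; apply: eq_bigr => a _.
exact: exchange_big.
Qed.

Lemma phiE x p : phi (E x) p = Q x p.
Proof. exact: sumE2. Qed.

Lemma copvE x : copv (E x) = c x.
Proof.
apply: functional_extensionality => i; apply: functional_extensionality => j.
exact: sumE2.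
Qed.

Lemma contrG x i j : \sum_p Q x p * tphi (copv (P p)) i j = tphi (c x) i j.
Proof.
rewrite -copvE -CL; apply: eq_bigr => p _; by rewrite phiE.
Qed.

Lemma contr_first T (G : I -> K) l : \sum_p tphi T p l * G p =
  \sum_x \sum_y T x y * (Q y l * (\sum_p Q x p * G p)).
Proof.
rewrite /tphi.
under eq_bigr => p _ do (rewrite big_distrl; under eq_bigr => x _ do rewrite big_distrl).
rewrite sum3r; apply: eq_bigr => x _; apply: eq_bigr => y _.
rewrite !big_distrr; apply: eq_bigr => p _ /=; ring.
Qed.

Lemma contr_second T (G : I -> K) i : \sum_p tphi T i p * G p =
  \sum_x \sum_y T x y * (Q x i * (\sum_p Q y p * G p)).
Proof.
rewrite /tphi.
under eq_bigr => p _ do (rewrite big_distrl; under eq_bigr => x _ do rewrite big_distrl).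
rewrite sum3r; apply: eq_bigr => x _; apply: eq_bigr => y _.
rewrite !big_distrr; apply: eq_bigr => p _ /=; ring.
Qed.

Lemma copv_lin f (Z : I -> I -> K) :
  \sum_x \sum_y copv f x y * Z x y = \sum_w f w * (\sum_x \sum_y c w x y * Z x y).
Proof.
rewrite /copv.
under eq_bigr => x _ do under eq_bigr => y _ do rewrite big_distrl.
rewrite sum3; apply: eq_bigr => w _.
rewrite big_distrr; apply: eq_bigr => x _ /=.
rewrite big_distrr; apply: eq_bigr => y _ /=; by rewrite mulrA.
Qed.

Lemma N_coassoc k i j l :
  \sum_p Cn k p l * Cn p i j = \sum_p Cn k i p * Cn p j l.
Proof.
have [_ [_ [_ [_ [_ [_ [_ [_ [Hco _]]]]]]]]] := H.
rewrite /Cn (contr_first _ (fun p => tphi (copv (P p)) i j)).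
rewrite (contr_second _ (fun p => tphi (copv (P p)) j l)).
under eq_bigr => x _ do under eq_bigr => y _ do rewrite contrG.
under [RHS]eq_bigr => x _ do under eq_bigr => y _ do rewrite contrG.
rewrite !copv_lin; apply: eq_bigr => w _; congr (_ * _).
rewrite /tphi.
under eq_bigr => x _ do under eq_bigr => y _ do rewrite mulrA.
under [RHS]eq_bigr => x _ do under eq_bigr => y _ do rewrite mulrA.
rewrite !flat4 [LHS]sum4_a [RHS]sum4_b.
apply: eq_bigr => a _; apply: eq_bigr => b _; apply: eq_bigr => y _.
transitivity (Q a i * Q b j * Q y l * \sum_x c w x y * c x a b).
  rewrite big_distrr; apply: eq_bigr => x _ /=; ring.
rewrite Hco big_distrr; apply: eq_bigr => x _ /=; ring.
Qed.

Lemma N_counitl k j : \sum_i EPn i * Cn k i j = kron k j.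
Proof.
have [_ [_ [_ [_ [_ [_ [_ [_ [_ [Hcu1 _]]]]]]]]]] := H.
under eq_bigr => i _ do rewrite mulrC.
rewrite /Cn (contr_first _ (fun p => EPn p)) /EPn /epsv.
under eq_bigr => x _ do under eq_bigr => y _ do rewrite sumQP.
rewrite copv_lin -PQ; apply: eq_bigr => w _; congr (_ * _).
rewrite exchange_big /=.
transitivity (\sum_y kron w y * Q y j); last exact: sum_kronl.
apply: eq_bigr => y _; rewrite -Hcu1 big_distrl; apply: eq_bigr => x _ /=; ring.
Qed.

Lemma N_counitr k i : \sum_j EPn j * Cn k i j = kron k i.
Proof.
have [_ [_ [_ [_ [_ [_ [_ [_ [_ [_ [Hcu2 _]]]]]]]]]]] := H.
under eq_bigr => j _ do rewrite mulrC.
rewrite /Cn (contr_second _ (fun p => EPn p)) /EPn /epsv.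
under eq_bigr => x _ do under eq_bigr => y _ do rewrite sumQP.
rewrite copv_lin -PQ; apply: eq_bigr => w _; congr (_ * _).
transitivity (\sum_x kron w x * Q x i); last exact: sum_kronl.
apply: eq_bigr => x _; rewrite -Hcu2 big_distrl; apply: eq_bigr => y _ /=; ring.
Qed.

Definition mq e f r := \sum_k m e f k * Q k r.

Lemma MnE p q r : Mn p q r = \sum_e \sum_f P p e * P q f * mq e f r.
Proof.
rewrite /Mn /phi /mulv /mq.
under eq_bigr => k _ do (rewrite big_distrl; under eq_bigr => e _ do rewrite big_distrl).
rewrite sum3r; apply: eq_bigr => e _; apply: eq_bigr => f _.
rewrite big_distrr; apply: eq_bigr => k _ /=; ring.
Qed.

Lemma swap22 (F : I -> I -> I -> I -> K) :
  \sum_a \sum_b \sum_c \sum_d F a b c d = \sum_c \sum_d \sum_a \sum_b F a b c d.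
Proof. under eq_bigr => a _ do rewrite sum3r. by rewrite sum3r. Qed.

Lemma c2aux p y (Y : I -> I -> K) :
  \sum_q Q y q * (\sum_e \sum_e' P p e * P q e' * Y e e') = \sum_e P p e * Y e y.
Proof.
transitivity (\sum_q Q y q * (\sum_e P p e * (\sum_e' P q e' * Y e e'))).
  apply: eq_bigr => q _; congr (_ * _); apply: eq_bigr => e _.
  rewrite big_distrr; apply: eq_bigr => e' _ /=; ring.
under eq_bigr => q _ do rewrite big_distrr.
rewrite exchange_big /=; apply: eq_bigr => e _.
rewrite -(sumQP y (fun e' => Y e e')) big_distrr; apply: eq_bigr => q _ /=; ring.
Qed.

Lemma contract2 T (Y : I -> I -> K) :
  \sum_p \sum_q tphi T p q * (\sum_e \sum_e' P p e * P q e' * Y e e') =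
  \sum_e \sum_e' T e e' * Y e e'.
Proof.
rewrite /tphi.
under eq_bigr => p _ do under eq_bigr => q _ do
  (rewrite big_distrl; under eq_bigr => x _ do rewrite big_distrl).
rewrite swap22; apply: eq_bigr => x _; apply: eq_bigr => y _.
transitivity (T x y * \sum_p Q x p * (\sum_q Q y q * (\sum_e \sum_e' P p e * P q e' * Y e e'))).
  rewrite big_distrr; apply: eq_bigr => p _ /=.
  rewrite !big_distrr; apply: eq_bigr => q _ /=; ring.
under eq_bigr => p _ do rewrite c2aux.
by rewrite (sumQP x (fun e => Y e y)).
Qed.

Lemma sgM i1 i2 j1 j2 i j : ssign (D j1) (D i2) * Mn i1 i2 i * Mn j1 j2 j =
  \sum_f \sum_f' P i2 f * P j2 f' * (\sum_e \sum_e' P i1 e * P j1 e' *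
     (ssign (d e') (d f) * mq e f i * mq e' f' j)).
Proof.
rewrite !MnE.
transitivity (\sum_e \sum_f \sum_e' \sum_f' ssign (D j1) (D i2) *
   (P i1 e * P i2 f * mq e f i) * (P j1 e' * P j2 f' * mq e' f' j)).
  rewrite [ssign _ _ * _]big_distrr /= big_distrl /=; apply: eq_bigr => e _.
  rewrite [ssign _ _ * _]big_distrr /= big_distrl /=; apply: eq_bigr => f _.
  rewrite big_distrr /=; apply: eq_bigr => e' _.
  rewrite big_distrr /=; apply: eq_bigr => f' _; ring.
under eq_bigr => e _ do rewrite exchange_big.
rewrite swap22; apply: eq_bigr => f _; apply: eq_bigr => f' _.
rewrite [RHS]big_distrr /=; apply: eq_bigr => e _.
rewrite [RHS]big_distrr /=; apply: eq_bigr => e' _.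
have [->|hf] := eqVneq (P i2 f) 0; first by rewrite !(mul0r, mulr0).
have [->|he] := eqVneq (P j1 e') 0; first by rewrite !(mul0r, mulr0).
rewrite (Ppar hf) (Ppar he); ring.
Qed.

Lemma swapC (X : I -> I -> K) (A : I -> I -> K) (W : I -> I -> I -> I -> K) :
  \sum_f \sum_f' X f f' * (\sum_e \sum_e' A e e' * W e e' f f') =
  \sum_e \sum_e' A e e' * (\sum_f \sum_f' X f f' * W e e' f f').
Proof.
rewrite !flat4 swap22; apply: eq_bigr => e _; apply: eq_bigr => e' _.
apply: eq_bigr => f _; apply: eq_bigr => f' _; ring.
Qed.

Lemma lin2 (a : I -> K) (X : I -> I -> I -> K) (Z : I -> I -> K) :
  \sum_e \sum_e' (\sum_p a p * X p e e') * Z e e' =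
  \sum_p a p * (\sum_e \sum_e' X p e e' * Z e e').
Proof.
under eq_bigr => x _ do under eq_bigr => y _ do rewrite big_distrl.
rewrite sum3; apply: eq_bigr => w _.
rewrite big_distrr; apply: eq_bigr => x _ /=.
rewrite big_distrr; apply: eq_bigr => y _ /=; by rewrite mulrA.
Qed.

Lemma lin2' (X : I -> I -> K) (a : I -> K) (Y : I -> I -> I -> K) :
  \sum_e \sum_e' X e e' * (\sum_p a p * Y p e e') =
  \sum_p a p * (\sum_e \sum_e' X e e' * Y p e e').
Proof.
under eq_bigr => x _ do under eq_bigr => y _ do rewrite big_distrr.
rewrite sum3; apply: eq_bigr => w _.
rewrite big_distrr; apply: eq_bigr => x _ /=.
rewrite big_distrr; apply: eq_bigr => y _ /=; ring.
Qed.

Lemma flat4l (F : I -> I -> I -> I -> K) A B :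
  (\sum_a \sum_b \sum_c \sum_e F a b c e) * A * B =
  \sum_a \sum_b \sum_c \sum_e F a b c e * A * B.
Proof.
rewrite -mulrA big_distrl; apply: eq_bigr => a _ /=.
rewrite big_distrl; apply: eq_bigr => b _ /=.
rewrite big_distrl; apply: eq_bigr => c' _ /=.
rewrite big_distrl; apply: eq_bigr => e _ /=; by rewrite mulrA.
Qed.

Lemma in4 (F : I -> I -> I -> I -> I -> K) :
  \sum_x \sum_a \sum_b \sum_c \sum_e F x a b c e =
  \sum_a \sum_b \sum_c \sum_e \sum_x F x a b c e.
Proof.
rewrite exchange_big; apply: eq_bigr => a _.
rewrite exchange_big; apply: eq_bigr => b _.
rewrite exchange_big; apply: eq_bigr => c' _.
exact: exchange_big.
Qed.

Lemma sum2prod C (A B : I -> K) :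
  \sum_x \sum_y C * A x * B y = C * (\sum_x A x) * (\sum_y B y).
Proof.
rewrite [C * _]big_distrr /= big_distrl /=; apply: eq_bigr => x _ /=.
rewrite [RHS]big_distrr /=; apply: eq_bigr => y _ /=; ring.
Qed.

Definition Wt i j e e' f f' := ssign (d e') (d f) * mq e f i * mq e' f' j.

Lemma TLbasis p q i j : tphi (copv (mulv (E p) (E q))) i j =
  \sum_e \sum_e' c p e e' * (\sum_f \sum_f' c q f f' * Wt i j e e' f f').
Proof.
have [_ [_ [_ [_ [_ [_ [_ [_ [_ [_ [_ [Ht _]]]]]]]]]]]] := H.
rewrite mulvE /tphi /copv.
under eq_bigr => x _ do under eq_bigr => y _ do rewrite Ht flat4l.
under eq_bigr => x _ do rewrite in4.
rewrite in4 flat4; apply: eq_bigr => e _; apply: eq_bigr => e' _.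
apply: eq_bigr => f _; apply: eq_bigr => f' _.
rewrite /Wt /mq.
transitivity (\sum_x \sum_y (c p e e' * c q f f' * ssign (d e') (d f)) *
   (m e f x * Q x i) * (m e' f' y * Q y j)).
  apply: eq_bigr => x _; apply: eq_bigr => y _; ring.
rewrite sum2prod; ring.
Qed.

Lemma TL v w i j : tphi (copv (mulv v w)) i j =
  \sum_e \sum_e' copv v e e' * (\sum_f \sum_f' copv w f f' * Wt i j e e' f f').
Proof.
rewrite -[v]lcE -[w]lcE mulv_lcl copv_lc tphi_lc.
rewrite [copv (lc v E)]copv_lc lin2; apply: eq_bigr => p _; congr (_ * _).
rewrite mulv_lcr copv_lc tphi_lc copv_lc /=.
under [RHS]eq_bigr => e _ do under eq_bigr => e' _ do rewrite lin2.
rewrite lin2'; apply: eq_bigr => q _; congr (_ * _).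
rewrite !copvE; exact: TLbasis.
Qed.

Lemma N_tens a b i j : \sum_p Mn a b p * Cn p i j =
  \sum_i1 \sum_j1 \sum_i2 \sum_j2 Cn a i1 j1 * Cn b i2 j2 *
     ssign (D j1) (D i2) * Mn i1 i2 i * Mn j1 j2 j.
Proof.
rewrite {1}/Mn /Cn CL TL.
transitivity (\sum_i1 \sum_j1 tphi (copv (P a)) i1 j1 *
  (\sum_i2 \sum_j2 tphi (copv (P b)) i2 j2 * (ssign (D j1) (D i2) * Mn i1 i2 i * Mn j1 j2 j))); last first.
  apply: eq_bigr => i1 _; apply: eq_bigr => j1 _.
  rewrite big_distrr; apply: eq_bigr => i2 _ /=.
  rewrite big_distrr; apply: eq_bigr => j2 _ /=; ring.
under [RHS]eq_bigr => i1 _ do under eq_bigr => j1 _ do under eq_bigr => i2 _ do under eq_bigr => j2 _ do rewrite sgM.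
under [RHS]eq_bigr => i1 _ do under eq_bigr => j1 _ do rewrite (contract2 _ (fun f f' => \sum_e \sum_e' P i1 e * P j1 e' * (ssign (d e') (d f) * mq e f i * mq e' f' j))) (swapC _ (fun e e' => P i1 e * P j1 e') (fun e e' f f' => ssign (d e') (d f) * mq e f i * mq e' f' j)).
by rewrite contract2.
Qed.

Definition antv (v : I -> K) : I -> K := fun j => \sum_i v i * s i j.
Definition Sn p q := phi (antv (P p)) q.

Lemma antv_lc a g : antv (lc a g) = lc a (fun p => antv (g p)).
Proof.
apply: functional_extensionality => j; rewrite /antv /lc.
under eq_bigr => k _ do rewrite big_distrl.
rewrite exchange_big /=; apply: eq_bigr => p _.
rewrite big_distrr /=; apply: eq_bigr => k _; by rewrite mulrA.
Qed.

Lemma Gbil v w q : phi (mulv (antv v) w) q =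
  \sum_e \sum_e' v e * w e' * phi (mulv (antv (E e)) (E e')) q.
Proof.
rewrite -{1}(lcE v) antv_lc mulv_lcl phi_lc; apply: eq_bigr => e _.
rewrite -{1}(lcE w) mulv_lcr phi_lc big_distrr; apply: eq_bigr => e' _ /=; ring.
Qed.

Lemma GE e e' q : phi (mulv (antv (E e)) (E e')) q =
  \sum_z (\sum_t s e t * m t e' z) * Q z q.
Proof.
rewrite /phi; apply: eq_bigr => z _; congr (_ * _).
rewrite /mulv /antv; apply: eq_bigr => t _.
under eq_bigr => j _ do rewrite mulrAC.
rewrite sumE1; congr (_ * _); exact: sumE2.
Qed.

Lemma N_ant k q : \sum_i \sum_j \sum_p Cn k i j * Sn i p * Mn p j q = EPn k * Un q.
Proof.
have [_ [_ [_ [_ [_ [_ [_ [_ [_ [_ [_ [_ [_ [_ [_ [Han _]]]]]]]]]]]]]]]] := H.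
transitivity (\sum_i \sum_j Cn k i j * phi (mulv (antv (P i)) (P j)) q).
  apply: eq_bigr => i _; apply: eq_bigr => j _.
  rewrite /Sn /Mn -AL big_distrr; apply: eq_bigr => p _ /=; ring.
under eq_bigr => i _ do under eq_bigr => j _ do rewrite Gbil.
rewrite /Cn (contract2 _ (fun e e' => phi (mulv (antv (E e)) (E e')) q)) copv_lin.
rewrite /EPn /epsv /Un big_distrl; apply: eq_bigr => w _ /=; rewrite -mulrA; congr (_ * _).
under eq_bigr => e _ do under eq_bigr => e' _ do rewrite GE big_distrr.
rewrite sum3 /phi big_distrr; apply: eq_bigr => z _ /=.
transitivity ((\sum_e \sum_e' \sum_t c w e e' * s e t * m t e' z) * Q z q); last first.
  by rewrite Han; ring.
rewrite big_distrl; apply: eq_bigr => e _ /=.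
rewrite big_distrl; apply: eq_bigr => e' _ /=.
rewrite !big_distrl big_distrr /=; apply: eq_bigr => t _ /=; ring.
Qed.

Lemma mul3_neq0 (x y z : K) : x * y * z != 0 -> [/\ x != 0, y != 0 & z != 0].
Proof. by rewrite !mulf_eq0 !negb_or => /andP [/andP [-> ->] ->]. Qed.

Lemma N_Mpar p q r : Mn p q r != 0 -> D r = D p (+) D q.
Proof.
have [Hmp _] := H.
rewrite MnE => /sum_nz [e] /sum_nz [f] /mul3_neq0 [h1 h2 /sum_nz [k]].
rewrite mulf_eq0 negb_or => /andP [h3 h4].
by rewrite -(Ppar h1) -(Ppar h2) -(Qpar h4) (Hmp _ _ _ h3).
Qed.

Lemma N_Cpar r p q : Cn r p q != 0 -> D r = D p (+) D q.
Proof.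
have [_ [_ [Hcp _]]] := H.
rewrite /Cn /tphi => /sum_nz [x] /sum_nz [y] /mul3_neq0 [/sum_nz [k] h1 h2 h3].
move: h1; rewrite mulf_eq0 negb_or => /andP [h4 h5].
by rewrite -(Ppar h4) -(Qpar h2) -(Qpar h3) (Hcp _ _ _ h5).
Qed.

End Transform.
Definition i0 : 'I_3 := @Ordinal 3 0 isT.
Definition i1 : 'I_3 := @Ordinal 3 1 isT.
Definition i2 : 'I_3 := @Ordinal 3 2 isT.

Lemma sum3E (K : fieldType) (F : 'I_3 -> K) : \sum_(i < 3) F i = F i0 + F i1 + F i2.
Proof.
rewrite !big_ord_recl big_ord0 addr0 addrA.
by congr (F _ + F _ + F _); apply: val_inj.
Qed.

Definition D21 (p : 'I_3) : bool := (nat_of_ord p == 2)%N.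

Section N21.
Variable K : fieldType.
Variables (M : 'I_3 -> 'I_3 -> 'I_3 -> K) (C : 'I_3 -> 'I_3 -> 'I_3 -> K)
  (U EP : 'I_3 -> K) (S : 'I_3 -> 'I_3 -> K).
Notation D := D21.
Hypothesis Mpar : forall p q r, M p q r != 0 -> D r = D p (+) D q.
Hypothesis Cpar : forall r p q, C r p q != 0 -> D r = D p (+) D q.
Hypothesis HU : forall r, U r = kron i0 r.
Hypothesis HEP0 : EP i0 = 1.
Hypothesis HEP1 : EP i1 = 0.
Hypothesis HEP2 : EP i2 = 0.
Hypothesis Hass : forall i j l k, \sum_p M i j p * M p l k = \sum_p M j l p * M i p k.
Hypothesis Hu1 : forall j k, \sum_p U p * M p j k = kron j k.
Hypothesis Hu2 : forall j k, \sum_p U p * M j p k = kron j k.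
Hypothesis Hco : forall k i j l, \sum_p C k p l * C p i j = \sum_p C k i p * C p j l.
Hypothesis Hcu1 : forall k j, \sum_i EP i * C k i j = kron k j.
Hypothesis Hcu2 : forall k i, \sum_j EP j * C k i j = kron k i.
Hypothesis Ht : forall a b i j, \sum_p M a b p * C p i j =
         \sum_i1 \sum_j1 \sum_i2 \sum_j2
           C a i1 j1 * C b i2 j2 * ssign (D j1) (D i2)
             * M i1 i2 i * M j1 j2 j.
Hypothesis Huc : forall i j, \sum_p U p * C p i j = U i * U j.
Hypothesis Hem : forall a b, \sum_p M a b p * EP p = EP a * EP b.
Hypothesis Han : forall k q, \sum_i \sum_j \sum_p C k i j * S i p * M p j q = EP k * U q.

Lemma M0 q r : M i0 q r = kron q r.
Proof. by rewrite -Hu1 sum3E !HU /kron /= !mul1r !mul0r !addr0. Qed.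

Lemma M0' q r : M q i0 r = kron q r.
Proof. by rewrite -Hu2 sum3E !HU /kron /= !mul1r !mul0r !addr0. Qed.

Lemma M11 : M i1 i1 i0 = 0.
Proof. have := Hem i1 i1; by rewrite sum3E HEP0 HEP1 HEP2 !mulr0 !addr0 mulr1. Qed.

Lemma M22 : M i2 i2 i0 = 0.
Proof. have := Hem i2 i2; by rewrite sum3E HEP0 HEP1 HEP2 !mulr0 !addr0 mulr1. Qed.

Definition Mtab (p q r : 'I_3) : K :=
 if p == i0 then kron q r else if q == i0 then kron p r
 else if [&& p == i1, q == i1 & r == i0] then 0
 else if [&& p == i2, q == i2 & r == i0] then 0
 else if D r == D p (+) D q then M p q r else 0.

Lemma Mt p q r : M p q r = Mtab p q r.
Proof.
rewrite /Mtab; case: ifP => [/eqP->|_]; first exact: M0.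
case: ifP => [/eqP->|_]; first exact: M0'.
case: ifP => [/and3P [/eqP-> /eqP-> /eqP->]|_]; first exact: M11.
case: ifP => [/and3P [/eqP-> /eqP-> /eqP->]|_]; first exact: M22.
case: eqP => // h; apply/eqP/negPn/negP => /Mpar; exact: h.
Qed.

Lemma C0 i j : C i0 i j = kron i0 i * kron i0 j.
Proof. by rewrite -!HU -Huc sum3E !HU /kron /= !mul1r !mul0r !addr0. Qed.

Lemma Cl k j : C k i0 j = kron k j.
Proof. by rewrite -Hcu1 sum3E HEP0 HEP1 HEP2 !mul1r !mul0r !addr0. Qed.

Lemma Cr k i : C k i i0 = kron k i.
Proof. by rewrite -Hcu2 sum3E HEP0 HEP1 HEP2 !mul1r !mul0r !addr0. Qed.

Definition Ctab (r p q : 'I_3) : K :=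
 if r == i0 then kron i0 p * kron i0 q
 else if p == i0 then kron r q else if q == i0 then kron r p
 else if D r == D p (+) D q then C r p q else 0.

Lemma Ct r p q : C r p q = Ctab r p q.
Proof.
rewrite /Ctab; case: ifP => [/eqP->|_]; first exact: C0.
case: ifP => [/eqP->|_]; first exact: Cl.
case: ifP => [/eqP->|_]; first exact: Cr.
case: eqP => // h; apply/eqP/negPn/negP => /Cpar; exact: h.
Qed.

Lemma combine2 (x y l1 r1 l2 r2 c1 c2 : K) : l1 = r1 -> l2 = r2 ->
  x - y = c1 * (l1 - r1) + c2 * (l2 - r2) -> x = y.
Proof. by move=> -> ->; rewrite !subrr !mulr0 addr0 => /eqP; rewrite subr_eq0 => /eqP. Qed.

Ltac simp h := rewrite ?sum3E ?Mt ?Ct /Mtab /Ctab /kron /ssign /D21 /= in h;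
  rewrite ?(mul0r, mulr0, mul1r, mulr1, add0r, addr0, mulN1r, mulrN1) in h.

Lemma key : False.
Proof.
have ea := Hass i1 i1 i2 i2. simp ea.
have eb := Hass i1 i2 i2 i1. simp eb.
have ec := Hass i2 i2 i2 i2. simp ec.
have ed := Ht i2 i2 i2 i2. simp ed.
have ee := Hco i2 i1 i1 i2. simp ee.
have eg := Ht i1 i2 i1 i2. simp eg.
have f00 := Han i0 i0. simp f00.
have f01 := Han i0 i1. simp f01.
have f10 := Han i1 i0. simp f10.
have f11 := Han i1 i1. simp f11.
rewrite HEP0 HEP1 !HU /kron /= !mulr0 !mulr1 in f00 f01 f10 f11.
rewrite f00 f01 f10 !mulr0 !mul0r !addr0 in f11.
set θ := M i1 i1 i1 in ea eb ec ed ee eg f11.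
set α := M i1 i2 i2 in ea eb ec ed ee eg f11.
set β := M i2 i1 i2 in ea eb ec ed ee eg f11.
set q := M i2 i2 i1 in ea eb ec ed ee eg f11.
set γ := C i1 i1 i1 in ea eb ec ed ee eg f11.
set λ := C i1 i2 i2 in ea eb ec ed ee eg f11.
set a := C i2 i1 i2 in ea eb ec ed ee eg f11.
set b := C i2 i2 i1 in ea eb ec ed ee eg f11.
have hql : q * λ = 0.
  have [->|hq] := eqVneq q 0; first by rewrite mul0r.
  have hat : α = θ by apply: (mulfI hq); rewrite mulrC eb.
  have hba : β = α by apply: (mulfI hq); rewrite -ec.
  rewrite ed hba; ring.
have h1 : (1 + a * θ) * (1 + γ * α) = 0.
  apply: (combine2 (c1 := -1) (c2 := 1 + b * β) eg hql); ring.
have hf : S i1 i1 * (1 + γ * θ) = -1.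
  apply: (combine2 (c1 := 1) (c2 := - S i2 i2) f11 hql); ring.
have hne : 1 + γ * θ != 0.
  apply/eqP => h; move: hf; rewrite h mulr0 => /eqP; rewrite eq_sym oppr_eq0 oner_eq0.
  done.
move/eqP: h1; rewrite mulf_eq0 => /orP [] /eqP h.
  have ha : a != 0 by apply/eqP => h0; move: h; rewrite h0 mul0r addr0 => /eqP; rewrite oner_eq0.
  have hg : γ = a by apply: (mulfI ha); rewrite ee.
  by move: hne; rewrite hg h eqxx.
have ha : α != 0 by apply/eqP => h0; move: h; rewrite h0 mulr0 addr0 => /eqP; rewrite oner_eq0.
have hg : θ = α by apply: (mulIf ha); rewrite ea.
by move: hne; rewrite hg h eqxx.
Qed.

End N21.

Definition D12 (p : 'I_3) : bool := (nat_of_ord p != 0)%N.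

Section N12.
Variable K : fieldType.
Variables (M : 'I_3 -> 'I_3 -> 'I_3 -> K) (C : 'I_3 -> 'I_3 -> 'I_3 -> K)
  (U EP : 'I_3 -> K).
Notation D := D12.
Hypothesis Mpar : forall p q r, M p q r != 0 -> D r = D p (+) D q.
Hypothesis Cpar : forall r p q, C r p q != 0 -> D r = D p (+) D q.
Hypothesis HU : forall r, U r = kron i0 r.
Hypothesis HEP0 : EP i0 = 1.
Hypothesis HEP1 : EP i1 = 0.
Hypothesis HEP2 : EP i2 = 0.
Hypothesis Hu1 : forall j k, \sum_p U p * M p j k = kron j k.
Hypothesis Hu2 : forall j k, \sum_p U p * M j p k = kron j k.
Hypothesis Hcu1 : forall k j, \sum_i EP i * C k i j = kron k j.
Hypothesis Hcu2 : forall k i, \sum_j EP j * C k i j = kron k i.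
Hypothesis Ht : forall a b i j, \sum_p M a b p * C p i j =
         \sum_i1 \sum_j1 \sum_i2 \sum_j2
           C a i1 j1 * C b i2 j2 * ssign (D j1) (D i2)
             * M i1 i2 i * M j1 j2 j.
Hypothesis Huc : forall i j, \sum_p U p * C p i j = U i * U j.

Lemma M0_12 q r : M i0 q r = kron q r.
Proof. by rewrite -Hu1 sum3E !HU /kron /= !mul1r !mul0r !addr0. Qed.

Lemma M0'_12 q r : M q i0 r = kron q r.
Proof. by rewrite -Hu2 sum3E !HU /kron /= !mul1r !mul0r !addr0. Qed.

Definition Mtab12 (p q r : 'I_3) : K :=
 if p == i0 then kron q r else if q == i0 then kron p r
 else if D r == D p (+) D q then M p q r else 0.

Lemma Mt12 p q r : M p q r = Mtab12 p q r.
Proof.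
rewrite /Mtab12; case: ifP => [/eqP->|_]; first exact: M0_12.
case: ifP => [/eqP->|_]; first exact: M0'_12.
case: eqP => // h; apply/eqP/negPn/negP => /Mpar; exact: h.
Qed.

Lemma C0_12 i j : C i0 i j = kron i0 i * kron i0 j.
Proof. by rewrite -!HU -Huc sum3E !HU /kron /= !mul1r !mul0r !addr0. Qed.

Lemma Cl_12 k j : C k i0 j = kron k j.
Proof. by rewrite -Hcu1 sum3E HEP0 HEP1 HEP2 !mul1r !mul0r !addr0. Qed.

Lemma Cr_12 k i : C k i i0 = kron k i.
Proof. by rewrite -Hcu2 sum3E HEP0 HEP1 HEP2 !mul1r !mul0r !addr0. Qed.

Definition Ctab12 (r p q : 'I_3) : K :=
 if r == i0 then kron i0 p * kron i0 q
 else if p == i0 then kron r q else if q == i0 then kron r p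
 else if D r == D p (+) D q then C r p q else 0.

Lemma Ct12 r p q : C r p q = Ctab12 r p q.
Proof.
rewrite /Ctab12; case: ifP => [/eqP->|_]; first exact: C0_12.
case: ifP => [/eqP->|_]; first exact: Cl_12.
case: ifP => [/eqP->|_]; first exact: Cr_12.
case: eqP => // h; apply/eqP/negPn/negP => /Cpar; exact: h.
Qed.

Lemma key12 : False.
Proof.
have h := Ht i1 i2 i1 i2.
rewrite ?sum3E ?Mt12 ?Ct12 /Mtab12 /Ctab12 /kron /ssign /D12 /= in h.
rewrite ?(mul0r, mulr0, mul1r, mulr1, add0r, addr0, mulN1r, mulrN1) in h.
by move/eqP: h; rewrite eq_sym oner_eq0.
Qed.
End N12.

Lemma ord3 (i : 'I_3) : [\/ i = i0, i = i1 | i = i2].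
Proof.
case: i => [[|[|[|k]]] h].
- by apply: Or31; apply: val_inj.
- by apply: Or32; apply: val_inj.
- by apply: Or33; apply: val_inj.
- by [].
Qed.

Lemma sumabo (K : fieldType) (a b o : 'I_3) (F : 'I_3 -> K) :
  a != b -> a != o -> b != o -> \sum_i F i = F a + F b + F o.
Proof.
rewrite sum3E.
by case: (ord3 a) => ->; case: (ord3 b) => ->; case: (ord3 o) => -> //= _ _ _; ring.
Qed.

Lemma coverabo (a b o k : 'I_3) :
  a != b -> a != o -> b != o -> [\/ k = a, k = b | k = o].
Proof.
by case: (ord3 a) => ->; case: (ord3 b) => ->; case: (ord3 o) => -> //= _ _ _;
   case: (ord3 k) => ->; auto using Or31, Or32, Or33.
Qed.

Section Cases.
Variable K : fieldType.
Variables (d : 'I_3 -> bool) (m : 'I_3 -> 'I_3 -> 'I_3 -> K) (u : 'I_3 -> K)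
  (c : 'I_3 -> 'I_3 -> 'I_3 -> K) (ep : 'I_3 -> K) (s : 'I_3 -> 'I_3 -> K).
Hypothesis H : is_hopf_superalgebra d m u c ep s.

Lemma u_par k : u k != 0 -> d k = false.
Proof. by have [_ [h _]] := H; apply: h. Qed.

Lemma ep_par k : ep k != 0 -> d k = false.
Proof. by have [_ [_ [_ [h _]]]] := H; apply: h. Qed.

Lemma u_odd k : d k = true -> u k = 0.
Proof. by move=> h; apply/eqP/negPn/negP => /u_par; rewrite h. Qed.

Lemma ep_odd k : d k = true -> ep k = 0.
Proof. by move=> h; apply/eqP/negPn/negP => /ep_par; rewrite h. Qed.

Lemma uep : \sum_p u p * ep p = 1.
Proof. by have [_ [_ [_ [_ [_ [_ [_ [_ [_ [_ [_ [_ [_ [_ [h _]]]]]]]]]]]]]]] := H. Qed.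

Lemma case21 (a b o : 'I_3) : a != b -> a != o -> b != o ->
  d a = false -> d b = false -> d o = true -> False.
Proof.
move=> hab hao hbo da db dO.
have hba : b != a by rewrite eq_sym.
have hoa : o != a by rewrite eq_sym.
have hob : o != b by rewrite eq_sym.
have uo := u_odd dO; have eo := ep_odd dO.
have hue : u a * ep a + u b * ep b = 1.
  by rewrite -uep (sumabo _ hab hao hbo) uo mul0r addr0.
pose P (p k : 'I_3) : K := if p == i0 then u k else if p == i1 then
   (if k == a then ep b else if k == b then - ep a else 0) else (if k == o then 1 else 0).
pose Q (k p : 'I_3) : K := if p == i0 then ep k else if p == i1 then
   (if k == a then u b else if k == b then - u a else 0) else (if k == o then 1 else 0).
have PQ : forall p q, \sum_k P p k * Q k q = kron p q.
  move=> p q; rewrite (sumabo _ hab hao hbo).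
  case: (ord3 p) => ->; case: (ord3 q) => ->;
  rewrite /P /Q /kron /= ?eqxx ?(negbTE hab, negbTE hba, negbTE hao, negbTE hoa, negbTE hbo, negbTE hob) /= ?uo ?eo;
  first [ by rewrite -hue; ring | ring ].
have QP : forall k l, \sum_p Q k p * P p l = kron k l.
  move=> k l; rewrite sum3E.
  case: (coverabo k hab hao hbo) => ->; case: (coverabo l hab hao hbo) => ->;
  rewrite /P /Q /kron /= ?eqxx ?(negbTE hab, negbTE hba, negbTE hao, negbTE hoa, negbTE hbo, negbTE hob) /= ?uo ?eo;
  first [ by rewrite -hue; ring | ring ].
have Ppar : forall p k, P p k != 0 -> d k = D21 p.
  move=> p k; case: (ord3 p) => ->; case: (coverabo k hab hao hbo) => ->;
  rewrite /P /D21 /= ?eqxx ?(negbTE hab, negbTE hba, negbTE hao, negbTE hoa, negbTE hbo, negbTE hob) /=;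
  by rewrite ?uo ?eo ?da ?db ?dO ?oppr0 ?eqxx.
have Qpar : forall k p, Q k p != 0 -> d k = D21 p.
  move=> k p; case: (ord3 p) => ->; case: (coverabo k hab hao hbo) => ->;
  rewrite /Q /D21 /= ?eqxx ?(negbTE hab, negbTE hba, negbTE hao, negbTE hoa, negbTE hbo, negbTE hob) /=;
  by rewrite ?uo ?eo ?da ?db ?dO ?oppr0 ?eqxx.
apply: (key (M:=Mn P Q m) (C:=Cn P Q c) (U:=Un Q u) (EP:=EPn P ep) (S:=Sn P Q s)).
- by move=> p q r; apply: (N_Mpar H Ppar Qpar).
- by move=> r p q; apply: (N_Cpar H Ppar Qpar).
- move=> r; rewrite /Un (_ : u = P i0) ?(phiP PQ) //.
- by rewrite /EPn /epsv -uep.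
- rewrite /EPn /epsv (sumabo _ hab hao hbo) /P /= ?eqxx ?(negbTE hba, negbTE hoa, negbTE hob) eo; ring.
- rewrite /EPn /epsv (sumabo _ hab hao hbo) /P /= ?eqxx ?(negbTE hao, negbTE hbo) eo; ring.
- exact: (N_assoc QP H).
- exact: (N_unitl PQ QP H).
- exact: (N_unitr PQ QP H).
- exact: (N_coassoc QP H).
- exact: (N_counitl PQ QP H).
- exact: (N_counitr PQ QP H).
- exact: (N_tens QP H Ppar).
- exact: (N_unitcop QP H).
- exact: (N_epsmul QP H).
- exact: (N_ant QP H).
Qed.

Lemma case12 (a o1 o2 : 'I_3) : a != o1 -> a != o2 -> o1 != o2 ->
  d a = false -> d o1 = true -> d o2 = true -> False.
Proof.
move=> hab hao hbo da db dO.
have hba : o1 != a by rewrite eq_sym.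
have hoa : o2 != a by rewrite eq_sym.
have hob : o2 != o1 by rewrite eq_sym.
have uo := u_odd dO; have eo := ep_odd dO.
have ub := u_odd db; have eb := ep_odd db.
have hue : u a * ep a = 1.
  by rewrite -uep (sumabo _ hab hao hbo) uo ub !mul0r !addr0.
pose P (p k : 'I_3) : K := if p == i0 then u k else if p == i1 then
   (if k == o1 then 1 else 0) else (if k == o2 then 1 else 0).
pose Q (k p : 'I_3) : K := if p == i0 then ep k else if p == i1 then
   (if k == o1 then 1 else 0) else (if k == o2 then 1 else 0).
have PQ : forall p q, \sum_k P p k * Q k q = kron p q.
  move=> p q; rewrite (sumabo _ hab hao hbo).
  case: (ord3 p) => ->; case: (ord3 q) => ->;
  rewrite /P /Q /kron /= ?eqxx ?(negbTE hab, negbTE hba, negbTE hao, negbTE hoa, negbTE hbo, negbTE hob) /= ?uo ?eo ?ub ?eb;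
  first [ by rewrite -hue; ring | ring ].
have QP : forall k l, \sum_p Q k p * P p l = kron k l.
  move=> k l; rewrite sum3E.
  case: (coverabo k hab hao hbo) => ->; case: (coverabo l hab hao hbo) => ->;
  rewrite /P /Q /kron /= ?eqxx ?(negbTE hab, negbTE hba, negbTE hao, negbTE hoa, negbTE hbo, negbTE hob) /= ?uo ?eo ?ub ?eb;
  first [ by rewrite -hue; ring | ring ].
have Ppar : forall p k, P p k != 0 -> d k = D12 p.
  move=> p k; case: (ord3 p) => ->; case: (coverabo k hab hao hbo) => ->;
  rewrite /P /D12 /= ?eqxx ?(negbTE hab, negbTE hba, negbTE hao, negbTE hoa, negbTE hbo, negbTE hob) /=;
  by rewrite ?uo ?eo ?ub ?eb ?da ?db ?dO ?oppr0 ?eqxx.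
have Qpar : forall k p, Q k p != 0 -> d k = D12 p.
  move=> k p; case: (ord3 p) => ->; case: (coverabo k hab hao hbo) => ->;
  rewrite /Q /D12 /= ?eqxx ?(negbTE hab, negbTE hba, negbTE hao, negbTE hoa, negbTE hbo, negbTE hob) /=;
  by rewrite ?uo ?eo ?ub ?eb ?da ?db ?dO ?oppr0 ?eqxx.
apply: (key12 (M:=Mn P Q m) (C:=Cn P Q c) (U:=Un Q u) (EP:=EPn P ep)).
- by move=> p q r; apply: (N_Mpar H Ppar Qpar).
- by move=> r p q; apply: (N_Cpar H Ppar Qpar).
- move=> r; rewrite /Un (_ : u = P i0) ?(phiP PQ) //.
- by rewrite /EPn /epsv -uep.
- rewrite /EPn /epsv (sumabo _ hab hao hbo) /P /= ?eqxx ?(negbTE hab, negbTE hba, negbTE hao, negbTE hoa, negbTE hbo, negbTE hob) ?eb ?eo; ring.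
- rewrite /EPn /epsv (sumabo _ hab hao hbo) /P /= ?eqxx ?(negbTE hab, negbTE hba, negbTE hao, negbTE hoa, negbTE hbo, negbTE hob) ?eb ?eo; ring.
- exact: (N_unitl PQ QP H).
- exact: (N_unitr PQ QP H).
- exact: (N_counitl PQ QP H).
- exact: (N_counitr PQ QP H).
- exact: (N_tens QP H Ppar).
- exact: (N_unitcop QP H).
Qed.

Lemma case3 : d i0 = true -> d i1 = true -> d i2 = true -> False.
Proof.
move=> h0 h1 h2.
have [_ [_ [_ [_ [_ [_ [Hu1 _]]]]]]] := H.
have := Hu1 i0 i0; rewrite sum3E (u_odd h0) (u_odd h1) (u_odd h2) !mul0r !addr0 /kron /=.
by move/eqP; rewrite eq_sym oner_eq0.
Qed.
End Cases.

Theorem theorem3p6 (K : closedFieldType) (charK0 : [pchar K] =i pred0)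
  (d : 'I_3 -> bool) (m : 'I_3 -> 'I_3 -> 'I_3 -> K) (u : 'I_3 -> K)
  (c : 'I_3 -> 'I_3 -> 'I_3 -> K) (ep : 'I_3 -> K) (s : 'I_3 -> 'I_3 -> K) :
  is_hopf_superalgebra d m u c ep s -> ~ (exists i, d i = true).
Proof.
move=> H [o ho].
case E0: (d i0); case E1: (d i1); case E2: (d i2).
- exact: (case3 H E0 E1 E2).
- exact: (@case12 _ _ _ _ _ _ _ H i2 i0 i1 isT isT isT E2 E0 E1).
- exact: (@case12 _ _ _ _ _ _ _ H i1 i0 i2 isT isT isT E1 E0 E2).
- exact: (@case21 _ _ _ _ _ _ _ H i1 i2 i0 isT isT isT E1 E2 E0).
- exact: (@case12 _ _ _ _ _ _ _ H i0 i1 i2 isT isT isT E0 E1 E2).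
- exact: (@case21 _ _ _ _ _ _ _ H i0 i2 i1 isT isT isT E0 E2 E1).
- exact: (@case21 _ _ _ _ _ _ _ H i0 i1 i2 isT isT isT E0 E1 E2).
- by case: (ord3 o) ho => ->; rewrite ?E0 ?E1 ?E2.
Qed.
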